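(* Let $\tau_L, \sigma_L, \delta_L \in \mathbb{R}$ and suppose the matrix $$C = \begin{bmatrix} \tau_L & 1 & 0 \\ -\sigma_L & 0 & 1 \\ \delta_L & 0 & 0 \end{bmatrix}$$ has eigenvalues $\lambda_1 < \lambda_2 < \lambda_3 < 0$. Then for the linear system $\dot y = C y$, the forward orbit $\phi(t)$ of any point $\phi(0) = (0,0,z)$ with $z < 0$ satisfies $\phi_1(t) < 0$ for all $t > 0$.
   Context: Here $y = (y_1,y_2,y_3) \in \mathbb{R}^3$ and $\phi(t) = (\phi_1(t),\phi_2(t),\phi_3(t))$; the initial points considered are those on the line $\{y_1 = y_2 = 0\}$ with negative third coordinate. *)

(* Defs.v *)
From HB Require Import structures.
From mathcomp Require Import all_boot all_order all_algebra.
From mathcomp Require Import all_classical all_reals all_analysis.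
Set Implicit Arguments. Unset Strict Implicit. Unset Printing Implicit Defensive.
Import Order.TTheory GRing.Theory Num.Theory.
Local Open Scope ring_scope.

Definition Cmat (R : nzRingType) (tau sigma delta : R) : 'M[R]_3 :=
  \matrix_(i < 3, j < 3)
    nth 0 (nth [::] [:: [:: tau; 1; 0]; [:: - sigma; 0; 1]; [:: delta; 0; 0]] i) j.

Definition init_pt (R : nzRingType) (z : R) : 'cV[R]_3 :=
  \col_(i < 3) nth 0 [:: 0; 0; z] i.

Definition solves_linear_ode (R : realType) (C : 'M[R]_3) (phi : R -> 'cV[R]_3) : Prop :=
  forall (t : R) (i : 'I_3), is_derive t 1 (fun s => phi s i ord0) ((C *m phi t) i ord0).

(* Main.v *)
Require Import Defs.
From HB Require Import structures.
From mathcomp Require Import all_boot all_order all_algebra.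
From mathcomp Require Import all_classical all_reals all_analysis.
From mathcomp Require Import ring lra.
Import Order.TTheory GRing.Theory Num.Theory.
Local Open Scope ring_scope.
Definition i1 : 'I_3 := @Ordinal 3 1 isT.
Definition i2 : 'I_3 := @Ordinal 3 2 isT.

Lemma sum3 (R : nmodType) (F : 'I_3 -> R) : \sum_i F i = F ord0 + F i1 + F i2.
Proof.
rewrite !big_ord_recr big_ord0 /= add0r.
by congr (F _ + F _ + F _); apply: val_inj.
Qed.

Lemma charp (R : realType) (tau sigma delta a : R) :
  eigenvalue (Cmat tau sigma delta) a -> a^+3 - tau * a^+2 + sigma * a - delta = 0.
Proof.
move/eigenvalueP=> [v Hv Hn].
have e (j : 'I_3) := congr1 (fun M : 'rV[R]_3 => M ord0 j) Hv.
have := e ord0; have := e i1; have := e i2.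
rewrite !mxE !sum3 !mxE /=.
set v0 := v ord0 ord0; set v1 := v ord0 i1; set v2 := v ord0 i2.
move=> E2 E1 E0.
have E2' : v1 = a * v2 by rewrite -E2; ring.
have E1' : v0 = a * v1 by rewrite -E1; ring.
have v2n : v2 != 0.
  apply: contraNneq Hn => h2; apply/eqP/rowP => j; rewrite mxE.
  have : j = ord0 \/ j = i1 \/ j = i2.
    case: j => [[|[|[|m]]] Hm]; [left|right;left|right;right|by []]; exact: val_inj.
  by case=> [->|[->|->]]; rewrite -/v0 -/v1 -/v2 ?E1' ?E2' h2; ring.
apply: (mulIf v2n); rewrite mul0r.
have H : v0 * tau + v1 * - sigma + v2 * delta - a * v0 = 0 by rewrite E0 subrr.
rewrite E1' E2' in H; rewrite -oppr0 -H; ring.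
Qed.

Lemma vieta (R : fieldType) (a b c tau sigma delta : R) :
  a != b -> a != c -> b != c ->
  a^+3 - tau * a^+2 + sigma * a - delta = 0 ->
  b^+3 - tau * b^+2 + sigma * b - delta = 0 ->
  c^+3 - tau * c^+2 + sigma * c - delta = 0 ->
  [/\ tau = a + b + c, sigma = a*b + a*c + b*c & delta = a*b*c].
Proof.
move=> ab ac bc pa pb pc.
have qab : a^+2 + a*b + b^+2 - tau*(a+b) + sigma = 0.
  have nz : a - b != 0 by rewrite subr_eq0.
  apply: (mulIf nz); rewrite mul0r -(subrr 0) -{1}pa -pb; ring.
have qac : a^+2 + a*c + c^+2 - tau*(a+c) + sigma = 0.
  have nz : a - c != 0 by rewrite subr_eq0.
  apply: (mulIf nz); rewrite mul0r -(subrr 0) -{1}pa -pc; ring.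
have ht : tau = a + b + c.
  have nz : b - c != 0 by rewrite subr_eq0.
  apply/eqP; rewrite -subr_eq0; apply/eqP; apply: (mulIf nz); rewrite mul0r.
  rewrite -(subrr 0) -{1}qac -qab; ring.
have hs : sigma = a*b + a*c + b*c.
  apply/eqP; rewrite -subr_eq0; apply/eqP; rewrite -qab ht; ring.
split => //; apply/eqP; rewrite -subr_eq0; apply/eqP; rewrite -oppr0 -pa hs ht; ring.
Qed.

Section A.
Local Open Scope classical_set_scope.
Variable R : realType.

Lemma lin3 (f g h : R -> R) (a b c s df dg dh : R) :
  is_derive s 1 f df -> is_derive s 1 g dg -> is_derive s 1 h dh ->
  is_derive s 1 (fun u => a * f u + b * g u + c * h u) (a*df + b*dg + c*dh).
Proof.
move=> Hf Hg Hh.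
have := is_deriveD (is_deriveD (is_deriveZ a Hf) (is_deriveZ b Hg)) (is_deriveZ c Hh).
by [].
Qed.

Lemma prodexp (f : R -> R) (df c s : R) : is_derive s 1 f df ->
  is_derive s 1 (fun u => f u * expR (c * u)) ((df + c * f s) * expR (c * s)).
Proof.
move=> Hf.
have He : is_derive s 1 (expR \o ( *%R c)) (expR (c * s) * c).
  apply: is_derive1_comp.
  have := is_deriveZ c (@is_derive_id _ R s 1).
  by rewrite /GRing.scale /= mulr1.
have := is_deriveM Hf He.
move=> H.
have -> : (fun u => f u * expR (c * u)) = (f * (expR \o *%R c)) by apply/funext.
refine (is_derive_eq H _).
rewrite /GRing.scale /=; ring.
Qed.

Lemma neg_mvt (f df : R -> R) (t : R) : 0 < t -> f 0 = 0 ->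
  (forall s : R, is_derive s 1 f (df s)) -> (forall s : R, 0 < s -> df s < 0) -> f t < 0.
Proof.
move=> t0 f0 Hd Hn.
have Hd' : forall x, x \in `]0, t[%R -> is_derive x 1 f (df x) by move=> x _; exact: Hd.
have [|c cI E] := MVT t0 Hd'.
  by apply: derivable_within_continuous => x _; have := Hd x; case.
rewrite f0 subr0 subr0 in E; rewrite E.
rewrite in_itv /= in cI; case/andP: cI => c0 _.
by rewrite pmulr_llt0 // Hn.
Qed.

Lemma cst_mvt (f : R -> R) (t : R) : 0 < t ->
  (forall s : R, is_derive s 1 f 0) -> f t = f 0.
Proof.
move=> t0 Hd.
have Hd' : forall x, x \in `]0, t[%R -> is_derive x 1 f ((fun _ => 0) x) by move=> x _; exact: Hd.
have [|c cI E] := MVT t0 Hd'.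
  by apply: derivable_within_continuous => x _; have := Hd x; case.
by apply/eqP; rewrite -subr_eq0 E mul0r.
Qed.
End A.

Arguments charp {R tau sigma delta a}.
Arguments vieta {R a b c tau sigma delta}.
Arguments lin3 {R f g h} a b c {s df dg dh}.
Arguments prodexp {R f df} c {s}.
Arguments neg_mvt {R f df t}.
Arguments cst_mvt {R f t}.

Theorem lemmaB1 (R : realType) (tau sigma delta : R) (l1 l2 l3 : R)
  (hord : l1 < l2 /\ l2 < l3 /\ l3 < 0)
  (heig : eigenvalue (Cmat tau sigma delta) l1 /\ eigenvalue (Cmat tau sigma delta) l2 /\
          eigenvalue (Cmat tau sigma delta) l3)
  (z : R) (hz : z < 0) (phi : R -> 'cV[R]_3)
  (hode : solves_linear_ode (Cmat tau sigma delta) phi)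
  (h0 : phi 0 = init_pt z) :
  forall t : R, 0 < t -> phi t ord0 ord0 < 0.
Proof.
move=> t t0.
case: hord => h12 [h23 _]; case: heig => e1 [e2 e3].
have n12 : l1 != l2 by rewrite lt_eqF.
have n23 : l2 != l3 by rewrite lt_eqF.
have n13 : l1 != l3 by rewrite lt_eqF // (lt_trans h12 h23).
have [ht hs hd] := vieta n12 n13 n23 (charp e1) (charp e2) (charp e3).
pose x (s : R) := phi s ord0 ord0; pose y s := phi s i1 ord0; pose w s := phi s i2 ord0.
have dx (s : R) : is_derive s 1 x (tau * x s + y s).
  have := hode s ord0; rewrite mxE sum3 !mxE /= => H.
  refine (is_derive_eq H _); rewrite /x /y; ring.
have dy (s : R) : is_derive s 1 y (- sigma * x s + w s).
  have := hode s i1; rewrite mxE sum3 !mxE /= => H.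
  refine (is_derive_eq H _); rewrite /x /w; ring.
have dw (s : R) : is_derive s 1 w (delta * x s).
  have := hode s i2; rewrite mxE sum3 !mxE /= => H.
  refine (is_derive_eq H _); rewrite /x; ring.
have x0 : x 0 = 0 by rewrite /x h0 mxE.
have y0 : y 0 = 0 by rewrite /y h0 mxE.
have w0 : w 0 = z by rewrite /w h0 mxE.
pose W (s : R) := l1 ^+ 2 * x s + l1 * y s + 1 * w s.
have dW (s : R) : is_derive s 1 W (l1 * W s).
  refine (is_derive_eq (lin3 (l1 ^+ 2) l1 1 (dx s) (dy s) (dw s)) _).
  rewrite /W ht hs hd; ring.
pose G (s : R) := W s * expR (- l1 * s).
have dG (s : R) : is_derive s 1 G 0.
  refine (is_derive_eq (prodexp (- l1) (dW s)) _); ring.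
have Wneg (s : R) : 0 < s -> W s < 0.
  move=> s0; have := cst_mvt s0 dG; rewrite /G mulr0 expR0 mulr1.
  rewrite {2}/W x0 y0 w0 mulr0 mulr0 add0r add0r mul1r => E.
  by rewrite -(pmulr_llt0 _ (expR_gt0 (- l1 * s))) E.
pose V (s : R) := (l1 + l2) * x s + 1 * y s + 0 * w s.
have dV (s : R) : is_derive s 1 V (l2 * V s + W s).
  refine (is_derive_eq (lin3 (l1 + l2) 1 0 (dx s) (dy s) (dw s)) _).
  rewrite /V /W ht hs hd; ring.
pose H (s : R) := V s * expR (- l2 * s).
have Vneg (s : R) : 0 < s -> V s < 0.
  move=> s0.
  have : H s < 0.
    apply: (neg_mvt (df := fun s => W s * expR (- l2 * s))) => //.
    - rewrite /H /V x0 y0; ring.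
    - move=> u; refine (is_derive_eq (prodexp (- l2) (dV u)) _); ring.
    - by move=> u u0; rewrite pmulr_llt0 ?expR_gt0 // Wneg.
  by rewrite /H pmulr_llt0 ?expR_gt0.
pose K (s : R) := x s * expR (- l3 * s).
have : K t < 0.
  apply: (neg_mvt (df := fun s => V s * expR (- l3 * s))) => //.
  - by rewrite /K x0 mul0r.
  - move=> u; refine (is_derive_eq (prodexp (- l3) (dx u)) _).
    rewrite /V ht; ring.
  - by move=> u u0; rewrite pmulr_llt0 ?expR_gt0 // Vneg.
by rewrite /K pmulr_llt0 ?expR_gt0.
Qed.
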